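(* Let $n\ge2$, let $v\in\mathbb A^{n-1}$, and let $x\ne x'$ be elements of $\Lambda$. Then for all $z\in v+x+V$ and $z'\in v+x'+V$ one has $\|z-z'\|\ge\frac1{n-1}$. In particular, for each $i$ the sets of $\mathfrak U_i=\{g_i+x+V:x\in\Lambda\}$ are pairwise at distance at least $1/(n-1)$.
   Context: $\mathbb A^{n-1}=\{x\in\mathbb R^n:\sum_{i=1}^n x_i=0\}$ with the norm $\|x\|=\sum_i|x_i|$. For a nonempty proper subset $I\subset\{1,\dots,n\}$ with complement $I^c$, set $\phi_I(x)=\frac{\sum_{i\in I}x_i}{\#I}-\frac{\sum_{i\notin I}x_i}{\#I^c}$. Let $V=\{x\in\mathbb A^{n-1}:\phi_I(x)\le\tfrac12$ for all nonempty proper $I\}$ and $\Lambda=\mathbb A^{n-1}\cap\mathbb Z^n$. For $i=0,\dots,n-1$ let $g_i\in\mathbb A^{n-1}$ be the vector with coordinates $(g_i)_j=(i-n)/n$ for $j\le i$ and $(g_i)_j=i/n$ for $j>i$. *)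

(* Defs.v *)
From HB Require Import structures.
From mathcomp Require Import all_boot all_order all_algebra.
Set Implicit Arguments. Unset Strict Implicit. Unset Printing Implicit Defensive.
Import Order.TTheory GRing.Theory Num.Theory.
Local Open Scope ring_scope.

Section Defs.
Variables (R : realFieldType) (n : nat).

Definition inA (x : 'I_n -> R) : Prop := \sum_(i < n) x i = 0.

Definition norm1 (x : 'I_n -> R) : R := \sum_(i < n) `|x i|.

Definition phi (I : {set 'I_n}) (x : 'I_n -> R) : R :=
  (\sum_(i in I) x i) / #|I|%:R - (\sum_(i in ~: I) x i) / #|~: I|%:R.

Definition inV (x : 'I_n -> R) : Prop :=
  inA x /\ forall I : {set 'I_n}, I != set0 -> I != setT -> phi I x <= 1 / 2.

(* Lambda = A^{n-1} ∩ Z^n, represented by integer vectors with zero sum *)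
Definition inLambda (x : 'I_n -> int) : Prop := \sum_(i < n) x i = 0.

Definition in_translate (a : 'I_n -> R) (x : 'I_n -> int) (z : 'I_n -> R) : Prop :=
  exists w : 'I_n -> R, inV w /\ forall j, z j = a j + (x j)%:~R + w j.

(* g_i : (g_i)_j = (i-n)/n for j <= i and i/n for j > i (1-based j);
   with 0-based j : 'I_n this is j < i. *)
Definition g (i : nat) : 'I_n -> R := fun j =>
  if (j < i)%N then (i%:R - n%:R) / n%:R else i%:R / n%:R.

End Defs.

(* Main.v *)
Require Import Defs.
From HB Require Import structures.
From mathcomp Require Import all_boot all_order all_algebra.
From Stdlib Require Import FunctionalExtensionality.
From mathcomp Require Import lra zify.
Import Order.TTheory GRing.Theory Num.Theory.
Local Open Scope ring_scope.

Section Aux.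
Variables (R : realFieldType) (n : nat).

Lemma phi_ext (I : {set 'I_n}) (f h : 'I_n -> R) :
  (forall j, f j = h j) -> phi I f = phi I h.
Proof. by move=> e; rewrite /phi; congr (_ / _ - _ / _); apply: eq_bigr. Qed.

Lemma phi_addsub (I : {set 'I_n}) (a b c : 'I_n -> R) :
  phi I (fun j => a j + b j - c j) = phi I a + phi I b - phi I c.
Proof.
rewrite /phi !sumrB !big_split /=.
rewrite !mulrBl !mulrDl; lra.
Qed.

Lemma phiC (I : {set 'I_n}) (f : 'I_n -> R) : phi (~: I) f = - phi I f.
Proof. by rewrite /phi setCK opprB. Qed.

Lemma div_le_norm (a c : R) : 1 <= c -> a / c <= `|a|.
Proof.
move=> c1; have c0 : 0 < c by apply: lt_le_trans c1.
rewrite ler_pdivrMr //.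
apply: le_trans (ler_norm a) _.
by rewrite ler_peMr.
Qed.

Lemma setC_neq0 (I : {set 'I_n}) : I != setT -> ~: I != set0.
Proof.
move=> h; apply/negP => /eqP e; move/negP: h; apply.
by rewrite -(setCK I) e setC0.
Qed.
Arguments setC_neq0 {I}.

Lemma setC_neqT (I : {set 'I_n}) : I != set0 -> ~: I != setT.
Proof.
move=> h; apply/negP => /eqP e; move/negP: h; apply.
by rewrite -(setCK I) e setCT.
Qed.
Arguments setC_neqT {I}.

Lemma card1 (I : {set 'I_n}) : I != set0 -> 1 <= (#|I|%:R : R).
Proof. by rewrite -card_gt0 => h; rewrite ler1n. Qed.
Arguments card1 {I}.

Lemma phi_le_norm (I : {set 'I_n}) (y : 'I_n -> R) :
  I != set0 -> I != setT -> phi I y <= norm1 y.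
Proof.
move=> h0 hT.
have e : norm1 y = \sum_(i in I) `|y i| + \sum_(i in ~: I) `|y i|.
  rewrite /norm1 (bigID (mem I)) /=; congr (_ + _).
  by apply: eq_bigl => i; rewrite in_setC.
rewrite e /phi.
apply: lerD.
  apply: le_trans; first exact: (div_le_norm _ _ (card1 h0)).
  exact: ler_norm_sum.
rewrite -mulNr.
apply: le_trans; first exact: (div_le_norm _ _ (card1 (setC_neq0 hT))).
rewrite normrN; exact: ler_norm_sum.
Qed.

Lemma exists_pos (d : 'I_n -> int) :
  \sum_i d i = 0 -> (exists j, d j != 0) -> exists j, 0 < d j.
Proof.
move=> s [j hj].
case: (boolP [exists i, 0 < d i]) => [/existsP [i hi]|]; first by exists i.
rewrite negb_exists => /forallP hn.
have s' : \sum_i (- d i) = 0 by rewrite sumrN s oppr0.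
have pos : forall i, xpredT i -> 0 <= - d i.
  by move=> i _; have := hn i; rewrite -leNgt oppr_ge0.
have H := psumr_eq0P (P := xpredT) (F := fun i => - d i) pos s'.
exfalso; move/negP: hj; apply.
by rewrite -oppr_eq0 (H j).
Qed.

Lemma core (x x' : 'I_n -> int) (v : 'I_n -> R) :
  (2 <= n)%N -> inLambda x -> inLambda x' -> x <> x' ->
  forall z z' : 'I_n -> R,
    in_translate v x z -> in_translate v x' z' ->
    1 / (n%:R - 1) <= norm1 (fun j => z j - z' j).
Proof.
move=> n2 hx hx' hne z z' [w [[_ hw] ez]] [w' [[_ hw'] ez']].
set d := fun j => x j - x' j.
have sd : \sum_i d i = 0 by rewrite /d sumrB hx hx' subrr.
have nz : exists j, d j != 0.
  case: (boolP [exists j, d j != 0]) => [/existsP [j hj]|]; first by exists j.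
  rewrite negb_exists => /forallP H; exfalso; apply: hne.
  apply: functional_extensionality => j; apply/eqP; rewrite -subr_eq0.
  by have := H j; rewrite negbK.
have [jp hjp] := exists_pos d sd nz.
have [jn hjn] : exists j, 0 < - d j.
  apply: exists_pos; first by rewrite sumrN sd oppr0.
  by case: nz => j hj; exists j; rewrite oppr_eq0.
set I := [set j | 0 < d j].
have I0 : I != set0 by apply/set0Pn; exists jp; rewrite inE.
have IT : I != setT.
  apply/negP => /eqP e; have : jn \in I by rewrite e inE.
  by rewrite inE; rewrite oppr_gt0 in hjn; rewrite ltNge ltW.
set D : 'I_n -> R := fun j => (d j)%:~R.
have ez2 : forall j, z j - z' j = D j + w j - w' j.
  by move=> j; rewrite ez ez' /D /d intrB; lra.
apply: (le_trans _ (phi_le_norm I (fun j => z j - z' j) I0 IT)).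
rewrite (phi_ext I _ _ ez2) phi_addsub.
have hw1 : - (1/2) <= phi I w.
  by rewrite lerNl -phiC; apply: hw; [apply: setC_neq0 | apply: setC_neqT].
have hw2 : phi I w' <= 1/2 by apply: hw'.
set S := \sum_(i in I) D i.
have SC : \sum_(i in ~: I) D i = - S.
  have : \sum_i D i = 0 by rewrite /D -rmorph_sum sd.
  rewrite (bigID (mem I)) /= => /eqP; rewrite addrC addr_eq0 => /eqP <-.
  by apply: eq_bigl => i; rewrite in_setC.
have SI : #|I|%:R <= S.
  rewrite /S -sum1_card natr_sum; apply: ler_sum => i; rewrite inE => hi.
  by rewrite /D ler1z.
have cI := card1 I0.
have cC := card1 (setC_neq0 IT).
have cCn : (#|~: I|%:R : R) <= n%:R - 1.
  have := cardsC I; rewrite card_ord => ec.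
  have hI : (1 <= #|I|)%N by rewrite card_gt0.
  rewrite -(natrB _ (ltnW n2)) ler_nat; lia.
have pD : phi I D = S / #|I|%:R + S / #|~: I|%:R.
  by rewrite /phi SC mulNr opprK.
have h1 : 1 <= S / #|I|%:R.
  by rewrite ler_pdivlMr ?mul1r //; apply: lt_le_trans cI.
have h2 : 1 / (n%:R - 1) <= S / #|~: I|%:R.
  have cpos : 0 < (#|~: I|%:R : R) by apply: lt_le_trans cC.
  apply: (@le_trans _ _ (1 / #|~: I|%:R)).
    rewrite !div1r lef_pV2 // posrE //; apply: lt_le_trans cpos cCn.
  apply: ler_wpM2r; first by rewrite invr_ge0 ltW.
  apply: le_trans SI; exact: cI.
rewrite pD; lra.
Qed.

End Aux.


Theorem lemma4p1p3 (R : realFieldType) (n : nat) : (2 <= n)%N ->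
  (forall (v : 'I_n -> R) (x x' : 'I_n -> int),
     inA v -> inLambda x -> inLambda x' -> x <> x' ->
     forall z z' : 'I_n -> R,
       in_translate v x z -> in_translate v x' z' ->
       1 / (n%:R - 1) <= norm1 (fun j => z j - z' j))
  /\
  (forall (i : nat) (x x' : 'I_n -> int), (i < n)%N ->
     inLambda x -> inLambda x' -> x <> x' ->
     forall z z' : 'I_n -> R,
       in_translate (@g R n i) x z -> in_translate (@g R n i) x' z' ->
       1 / (n%:R - 1) <= norm1 (fun j => z j - z' j)).
Proof.
move=> n2; split.
  move=> v x x' _ hx hx' hne; exact: core.
move=> i x x' _ hx hx' hne; exact: core.
Qed.
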